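(* Let $m \ge 1$ be an integer and let $c : [-1,1] \to \mathbb{R}$ be continuous with $c^{-1}(1) = \{-1, 0, 1\}$ and such that $\theta \mapsto \theta\, c(\theta)$ is strictly increasing on $[-1,1]$. Let $[a,b]$ be an angular interval with $0 < b - a < 2\pi$, split into $m$ equal consecutive subintervals $[a_{i-1}, a_i]$, $i = 1,\dots,m$ ($a_0 = a$, $a_m = b$), and let $\varphi_i : [a_{i-1}, a_i] \to [-1,1]$ be the increasing affine bijection. Define $F : \mathbb{R}^2 \to \mathbb{R}^2$ by $F(o) = o$ and, in the polar coordinates described below, $$F(\theta, r) = \big(\varphi_i^{-1}(\varphi_i(\theta)\, c(\varphi_i(\theta))),\; r + 1 - 2\varphi_i(\theta)^2\big) \quad\text{if } \theta \in [a_{i-1}, a_i],$$ and $F(\theta, r) = (\theta, r - 1)$ if $\theta \notin [a,b]$. Then $o$ is an isolated fixed point of every iterate $F^n$, and: (1) if $c([-1,1]) \subset [1/2, 1]$, then $i(F^n, o) = 1 - m$ for every $n \ge 1$; (2) if $c([-1,1]) \subset [1, 2]$, then $i(F^n, o) = 1 + m$ for every $n \ge 1$. In particular (case $m=1$) the corresponding maps have indices $i(F^n,o)=0$ for all $n$ in case (1) and $i(F^n,o)=2$ for all $n$ in case (2).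
   Context: Polar coordinates on $\mathbb{R}^2\setminus\{o\}$ ($o$ the origin): a point is written $(\theta, r)$ with $\theta \in (-\pi,\pi]$ an angle and $r \in \mathbb{R}$, corresponding to $e^{r}(\cos\theta, \sin\theta)$; thus the origin corresponds to $r = -\infty$. $i(g,o)$ denotes the fixed point index of $g$ at the isolated fixed point $o$ (degree of $x \mapsto (x-g(x))/\|x-g(x)\|$ on a small circle around $o$). *)

(* Defs.v *)
From Stdlib Require Import Reals Lra Lia ZArith.
Open Scope R_scope.

Definition pt := (R * R)%type.
Definition origin : pt := (0, 0).
Definition vnorm (p : pt) : R := sqrt (fst p * fst p + snd p * snd p).
Definition vsub (p q : pt) : pt := (fst p - fst q, snd p - snd q).
Definition vscal (s : R) (p : pt) : pt := (s * fst p, s * snd p).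

Definition polar (theta r : R) : pt := (exp r * cos theta, exp r * sin theta).

Definition cont_on (f : R -> R) (lo hi : R) : Prop :=
  forall x, lo <= x <= hi -> forall eps, eps > 0 ->
    exists delta, delta > 0 /\
      forall y, lo <= y <= hi -> Rabs (y - x) < delta -> Rabs (f y - f x) < eps.

Definition loop_degree (u : R -> pt) (k : Z) : Prop :=
  exists th : R -> R, continuity th /\
    (forall t, 0 <= t <= 1 -> u t = (cos (th t), sin (th t))) /\
    th 1 - th 0 = 2 * PI * IZR k.

Definition circ (rho t : R) : pt := (rho * cos (2 * PI * t), rho * sin (2 * PI * t)).

Definition isolated_fixed_point (g : pt -> pt) : Prop :=
  g origin = origin /\
  exists eps, eps > 0 /\ forall x, 0 < vnorm x < eps -> g x <> x.

Definition fixed_point_index (g : pt -> pt) (k : Z) : Prop :=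
  exists eps, eps > 0 /\
    (forall x, 0 < vnorm x < eps -> g x <> x) /\
    forall rho, 0 < rho < eps ->
      loop_degree (fun t => let x := circ rho t in
                            vscal (/ vnorm (vsub x (g x))) (vsub x (g x))) k.

Definition apt (a b : R) (m : nat) (i : nat) : R := a + INR i * (b - a) / INR m.
Definition phi (a b : R) (m i : nat) (th : R) : R :=
  2 * (th - apt a b m (i - 1)) / (apt a b m i - apt a b m (i - 1)) - 1.
Definition phi_inv (a b : R) (m i : nat) (s : R) : R :=
  apt a b m (i - 1) + (s + 1) * (apt a b m i - apt a b m (i - 1)) / 2.

(* F is the map of the statement (polar angles taken modulo 2 pi). *)
Definition is_F (a b : R) (m : nat) (c : R -> R) (F : pt -> pt) : Prop :=
  F origin = origin /\
  (forall (i : nat) (th r : R), (1 <= i <= m)%nat ->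
     apt a b m (i - 1) <= th <= apt a b m i ->
     F (polar th r) =
       polar (phi_inv a b m i (phi a b m i th * c (phi a b m i th)))
             (r + 1 - 2 * (phi a b m i th) ^ 2)) /\
  (forall th r : R, (forall k : Z, ~ (a <= th + 2 * PI * IZR k <= b)) ->
     F (polar th r) = polar th (r - 1)).

(* Main.v *)
Require Import Defs.
From Stdlib Require Import Reals Lra Lia ZArith.
Open Scope R_scope.

Definition cpt (f : R -> R) (x : R) : Prop :=
  forall eps, eps > 0 -> exists d, d > 0 /\
    forall y, Rabs (y - x) < d -> Rabs (f y - f x) < eps.

Lemma cpt_cont : forall f x, cpt f x -> continuity_pt f x.
Proof.
  intros f x H eps He. destruct (H eps He) as [d [Hd Hy]].
  exists d; split; auto. intros y [_ Hy2]. apply Hy. exact Hy2.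
Qed.

Lemma cont_cpt : forall f x, continuity_pt f x -> cpt f x.
Proof.
  intros f x H eps He. destruct (H eps He) as [d [Hd Hy]].
  exists d; split; auto. intros y Hyx.
  destruct (Req_dec y x) as [->|Hne].
  - unfold Rminus. rewrite Rplus_opp_r, Rabs_R0. lra.
  - apply (Hy y). split. split. exact I. auto. exact Hyx.
Qed.

Lemma continuity_pt_ext : forall f g x, (forall y, f y = g y) ->
  continuity_pt f x -> continuity_pt g x.
Proof. intros f g x He H. apply (continuity_pt_locally_ext f g 1 x); auto; lra. Qed.
Lemma continuity_ext : forall f g, (forall y, f y = g y) ->
  continuity f -> continuity g.
Proof. intros f g He H x. apply (continuity_pt_ext f); auto. Qed.

Definition clamp (lo hi x : R) : R := Rmax lo (Rmin hi x).

Lemma clamp_in : forall lo hi x, lo <= hi -> lo <= clamp lo hi x <= hi.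
Proof.
  intros. unfold clamp. unfold Rmax, Rmin.
  repeat destruct Rle_dec; lra.
Qed.

Lemma clamp_id : forall lo hi x, lo <= x <= hi -> clamp lo hi x = x.
Proof.
  intros. unfold clamp, Rmax, Rmin. repeat destruct Rle_dec; lra.
Qed.

Lemma clamp_lip : forall lo hi x y, lo <= hi ->
  Rabs (clamp lo hi y - clamp lo hi x) <= Rabs (y - x).
Proof.
  intros. unfold clamp, Rmax, Rmin.
  repeat destruct Rle_dec; unfold Rabs; repeat destruct Rcase_abs; lra.
Qed.

Lemma clamp_cont : forall lo hi, lo <= hi -> continuity (clamp lo hi).
Proof.
  intros lo hi Hl x. apply cpt_cont. intros eps He. exists eps; split; auto.
  intros y Hy. eapply Rle_lt_trans. apply clamp_lip; auto. auto.
Qed.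

(* continuity on a closed interval via clamping *)
Definition C (f : R -> R) (lo hi : R) : Prop :=
  continuity (fun x => f (clamp lo hi x)).

Lemma C_of_cont_on : forall f lo hi,
  lo <= hi ->
  (forall x, lo <= x <= hi -> forall eps, eps > 0 ->
    exists delta, delta > 0 /\
      forall y, lo <= y <= hi -> Rabs (y - x) < delta -> Rabs (f y - f x) < eps) ->
  C f lo hi.
Proof.
  intros f lo hi Hl H x. apply cpt_cont. intros eps He.
  destruct (H (clamp lo hi x) (clamp_in lo hi x Hl) eps He) as [d [Hd Hy]].
  exists d; split; auto. intros y Hyx. apply Hy. apply clamp_in; auto.
  eapply Rle_lt_trans. apply clamp_lip; auto. auto.
Qed.

Lemma C_of_global : forall f lo hi, continuity f -> lo <= hi -> C f lo hi.
Proof.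
  intros f lo hi Hf Hl x. unfold C.
  apply (continuity_pt_comp (clamp lo hi) f). apply clamp_cont; auto. apply Hf.
Qed.

Lemma C_ext : forall f g lo hi, (forall x, lo <= x <= hi -> f x = g x) ->
  lo <= hi -> C f lo hi -> C g lo hi.
Proof.
  intros f g lo hi He Hl H x. unfold C.
  apply (continuity_pt_ext (fun x => f (clamp lo hi x))).
  intro y. apply He. apply clamp_in; auto. apply H.
Qed.

Lemma C_sub : forall f lo hi lo' hi', lo <= lo' -> lo' <= hi' -> hi' <= hi ->
  C f lo hi -> C f lo' hi'.
Proof.
  intros f lo hi lo' hi' H1 H2 H3 H x. unfold C.
  apply (continuity_pt_ext (fun x => f (clamp lo hi (clamp lo' hi' x)))).
  intro y. rewrite (clamp_id lo hi). auto. pose proof (clamp_in lo' hi' y H2). lra.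
  apply (continuity_pt_comp (clamp lo' hi') (fun z => f (clamp lo hi z))).
  apply clamp_cont; auto. apply H.
Qed.

Lemma C_comp : forall f g l1 h1 l2 h2, l1 <= h1 -> l2 <= h2 ->
  C f l1 h1 -> C g l2 h2 -> (forall x, l1 <= x <= h1 -> l2 <= f x <= h2) ->
  C (fun x => g (f x)) l1 h1.
Proof.
  intros f g l1 h1 l2 h2 Hl1 Hl2 Hf Hg Hm x. unfold C.
  apply (continuity_pt_ext (fun x => g (clamp l2 h2 (f (clamp l1 h1 x))))).
  intro y. rewrite clamp_id. auto. apply Hm. apply clamp_in; auto.
  apply (continuity_pt_comp (fun x => f (clamp l1 h1 x)) (fun z => g (clamp l2 h2 z))).
  apply Hf. apply Hg.
Qed.

Lemma C_plus : forall f g lo hi, C f lo hi -> C g lo hi -> C (fun x => f x + g x) lo hi.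
Proof. intros f g lo hi Hf Hg x. unfold C. apply (continuity_pt_plus (fun x => f (clamp lo hi x)) (fun x => g (clamp lo hi x))); auto. Qed.
Lemma C_minus : forall f g lo hi, C f lo hi -> C g lo hi -> C (fun x => f x - g x) lo hi.
Proof. intros f g lo hi Hf Hg x. unfold C. apply (continuity_pt_minus (fun x => f (clamp lo hi x)) (fun x => g (clamp lo hi x))); auto. Qed.
Lemma C_mult : forall f g lo hi, C f lo hi -> C g lo hi -> C (fun x => f x * g x) lo hi.
Proof. intros f g lo hi Hf Hg x. unfold C. apply (continuity_pt_mult (fun x => f (clamp lo hi x)) (fun x => g (clamp lo hi x))); auto. Qed.
Lemma C_const : forall k lo hi, C (fun _ => k) lo hi.
Proof. intros k lo hi x. unfold C. apply continuity_const. intros a b; auto. Qed.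
Lemma C_id : forall lo hi, lo <= hi -> C (fun x => x) lo hi.
Proof. intros lo hi Hl x. unfold C. apply clamp_cont; auto. Qed.
Lemma C_div : forall f g lo hi, lo <= hi -> C f lo hi -> C g lo hi ->
  (forall x, lo <= x <= hi -> g x <> 0) -> C (fun x => f x / g x) lo hi.
Proof. intros f g lo hi Hl Hf Hg Hn x. unfold C.
  apply (continuity_pt_div (fun x => f (clamp lo hi x)) (fun x => g (clamp lo hi x))); auto.
  apply Hn. apply clamp_in; auto. Qed.
Lemma C_app : forall h f lo hi, lo <= hi -> C f lo hi ->
  (forall x, lo <= x <= hi -> continuity_pt h (f x)) -> C (fun x => h (f x)) lo hi.
Proof. intros h f lo hi Hl Hf Hh x. unfold C.
  apply (continuity_pt_comp (fun x => f (clamp lo hi x)) h). apply Hf.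
  apply Hh. apply clamp_in; auto. Qed.

Lemma glue_cont : forall p q m, continuity p -> continuity q -> p m = q m ->
  continuity (fun x => if Rle_dec x m then p x else q x).
Proof.
  intros p q m Hp Hq Hm x0. apply cpt_cont. intros eps He.
  destruct (cont_cpt _ _ (Hp x0) eps He) as [d1 [Hd1 H1]].
  destruct (cont_cpt _ _ (Hq x0) eps He) as [d2 [Hd2 H2]].
  destruct (Rtotal_order x0 m) as [Hlt|[Heq|Hgt]].
  - exists (Rmin d1 (m - x0)). split. apply Rmin_pos; lra.
    intros y Hy. pose proof (Rmin_l d1 (m - x0)). pose proof (Rmin_r d1 (m-x0)).
    destruct (Rle_dec y m); destruct (Rle_dec x0 m); try lra.
    apply H1. lra. revert Hy; unfold Rabs; destruct Rcase_abs; lra.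
  - subst x0. exists (Rmin d1 d2). split. apply Rmin_pos; lra.
    intros y Hy. pose proof (Rmin_l d1 d2). pose proof (Rmin_r d1 d2).
    destruct (Rle_dec m m); try lra.
    destruct (Rle_dec y m). apply H1; lra. rewrite Hm. apply H2; lra.
  - exists (Rmin d2 (x0 - m)). split. apply Rmin_pos; lra.
    intros y Hy. pose proof (Rmin_l d2 (x0 - m)). pose proof (Rmin_r d2 (x0-m)).
    destruct (Rle_dec y m); destruct (Rle_dec x0 m); try lra.
    revert Hy; unfold Rabs; destruct Rcase_abs; lra.
    apply H2; lra.
Qed.

Lemma C_glue : forall f lo mid hi, lo <= mid -> mid <= hi ->
  C f lo mid -> C f mid hi -> C f lo hi.
Proof.
  intros f lo mid hi H1 H2 Ha Hb.
  unfold C. apply (continuity_ext (fun x => if Rle_dec x mid then f (clamp lo mid x) else f (clamp mid hi x))).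
  intro x. unfold clamp, Rmax, Rmin. repeat destruct Rle_dec; try (f_equal; lra).
  apply glue_cont; auto. unfold clamp, Rmax, Rmin. repeat destruct Rle_dec; try (f_equal; lra).
Qed.

Definition fl (t : R) : Z := (up t - 1)%Z.

Lemma fl_spec : forall t, IZR (fl t) <= t < IZR (fl t) + 1.
Proof.
  intros t. unfold fl. rewrite minus_IZR. destruct (archimed t). simpl. lra.
Qed.

Lemma fl_unique : forall t k, IZR k <= t < IZR k + 1 -> fl t = k.
Proof.
  intros t k [H1 H2]. unfold fl. rewrite <- (up_tech t k); auto. lia.
  rewrite plus_IZR. simpl. lra.
Qed.

Definition Stair (B : R -> R) (K : R) (t : R) : R :=
  K * IZR (fl t) + B (t - IZR (fl t)).

Lemma stair_local : forall B K t k, B 1 = B 0 + K ->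
  IZR k <= t <= IZR k + 1 -> Stair B K t = K * IZR k + B (t - IZR k).
Proof.
  intros B K t k HB [H1 H2]. unfold Stair.
  destruct (Rlt_dec t (IZR k + 1)).
  - rewrite (fl_unique t k); auto; lra.
  - assert (t = IZR (k+1)) by (rewrite plus_IZR; simpl; lra).
    rewrite (fl_unique t (k+1)).
    rewrite H. rewrite plus_IZR. simpl.
    replace (IZR k + 1 - (IZR k + 1)) with 0 by ring.
    replace (IZR k + 1 - IZR k) with 1 by ring. rewrite HB. ring.
    rewrite H; lra.
Qed.

Lemma stair_shift : forall B K t, B 1 = B 0 + K ->
  Stair B K (t + 1) = Stair B K t + K.
Proof.
  intros B K t HB. rewrite (stair_local B K (t+1) (fl t + 1)); auto.
  unfold Stair. rewrite plus_IZR. simpl.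
  replace (t + 1 - (IZR (fl t) + 1)) with (t - IZR (fl t)) by ring. ring.
  rewrite plus_IZR; simpl. pose proof (fl_spec t). lra.
Qed.

Lemma stair_cont : forall B K, C B 0 1 -> B 1 = B 0 + K -> continuity (Stair B K).
Proof.
  intros B K HC HB t0.
  set (k := fl t0). pose proof (fl_spec t0) as Hk. fold k in Hk.
  set (p := fun t => K * IZR (k-1) + B (clamp 0 1 (t - IZR (k-1)))).
  set (q := fun t => K * IZR k + B (clamp 0 1 (t - IZR k))).
  assert (Hp : continuity p).
  { unfold p. intro x. apply continuity_pt_plus. apply continuity_pt_const. intros a b; auto.
    apply (continuity_pt_comp (fun t => t - IZR (k-1)) (fun z => B (clamp 0 1 z))).
    apply continuity_pt_minus. apply derivable_continuous_pt, derivable_pt_id. apply continuity_pt_const; intros a b; auto.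
    apply HC. }
  assert (Hq : continuity q).
  { unfold q. intro x. apply continuity_pt_plus. apply continuity_pt_const. intros a b; auto.
    apply (continuity_pt_comp (fun t => t - IZR k) (fun z => B (clamp 0 1 z))).
    apply continuity_pt_minus. apply derivable_continuous_pt, derivable_pt_id. apply continuity_pt_const; intros a b; auto.
    apply HC. }
  assert (Hpq : p (IZR k) = q (IZR k)).
  { unfold p, q. rewrite minus_IZR. simpl.
    replace (IZR k - (IZR k - 1)) with 1 by ring. replace (IZR k - IZR k) with 0 by ring.
    rewrite !clamp_id by lra. rewrite HB. ring. }
  apply (continuity_pt_locally_ext (fun t => if Rle_dec t (IZR k) then p t else q t) _ (Rmin (t0 - (IZR k - 1)) (IZR k + 1 - t0)) t0).
  apply Rmin_pos; lra.
  intros y Hy. unfold Rdist in Hy.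
  pose proof (Rmin_l (t0 - (IZR k - 1)) (IZR k + 1 - t0)).
  pose proof (Rmin_r (t0 - (IZR k - 1)) (IZR k + 1 - t0)).
  assert (IZR k - 1 < y < IZR k + 1) by (revert Hy; unfold Rabs; destruct Rcase_abs; lra).
  destruct (Rle_dec y (IZR k)).
  - unfold p. rewrite clamp_id. rewrite (stair_local B K y (k-1)); auto.
    rewrite minus_IZR; simpl; lra. rewrite minus_IZR; simpl; lra.
  - unfold q. rewrite clamp_id. rewrite (stair_local B K y k); auto. lra. lra.
  - apply glue_cont; auto.
Qed.

Lemma cos_per : forall x z, cos (x + 2 * PI * IZR z) = cos x.
Proof.
  intros x z. destruct (Z_le_gt_dec 0 z).
  - rewrite <- (Z2Nat.id z) by lia. rewrite <- INR_IZR_INZ.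
    rewrite <- (cos_period x (Z.to_nat z)). f_equal. ring.
  - pose proof (cos_period (x + 2 * PI * IZR z) (Z.to_nat (- z))).
    rewrite INR_IZR_INZ, Z2Nat.id, opp_IZR in H by lia.
    rewrite <- H. f_equal. ring.
Qed.
Lemma sin_per : forall x z, sin (x + 2 * PI * IZR z) = sin x.
Proof.
  intros x z. destruct (Z_le_gt_dec 0 z).
  - rewrite <- (Z2Nat.id z) by lia. rewrite <- INR_IZR_INZ.
    rewrite <- (sin_period x (Z.to_nat z)). f_equal. ring.
  - pose proof (sin_period (x + 2 * PI * IZR z) (Z.to_nat (- z))).
    rewrite INR_IZR_INZ, Z2Nat.id, opp_IZR in H by lia.
    rewrite <- H. f_equal. ring.
Qed.

Lemma cos_2atan : forall u, cos (2 * atan u) = (1 - u * u) / (1 + u * u).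
Proof.
  intro u. rewrite cos_2a, cos_atan, sin_atan. unfold Rsqr.
  assert (Hp : 0 < 1 + u * u) by nra.
  pose proof (sqrt_sqrt (1 + u*u) (Rlt_le _ _ Hp)).
  pose proof (sqrt_lt_R0 _ Hp).
  field_simplify; try lra.
  replace (sqrt (1 + u * u) ^ 2) with (u^2 + 1) by (rewrite <- Rsqr_pow2; unfold Rsqr; lra).
  reflexivity.
Qed.

Lemma sin_2atan : forall u, sin (2 * atan u) = 2 * u / (1 + u * u).
Proof.
  intro u. rewrite sin_2a, cos_atan, sin_atan. unfold Rsqr.
  assert (Hp : 0 < 1 + u * u) by nra.
  pose proof (sqrt_sqrt (1 + u*u) (Rlt_le _ _ Hp)).
  pose proof (sqrt_lt_R0 _ Hp).
  field_simplify; try lra.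
  replace (sqrt (1 + u * u) ^ 2) with (u^2 + 1) by (rewrite <- Rsqr_pow2; unfold Rsqr; lra).
  reflexivity.
Qed.

Definition nrm (p q : R) : R := sqrt (p * p + q * q).

Lemma nrm_sq : forall p q, nrm p q * nrm p q = p * p + q * q.
Proof. intros. unfold nrm. apply sqrt_sqrt. nra. Qed.
Lemma nrm_ge0 : forall p q, 0 <= nrm p q.
Proof. intros. unfold nrm. apply sqrt_pos. Qed.

Lemma nrm_plus_pos : forall p q, q <> 0 \/ 0 < p -> 0 < nrm p q + p.
Proof.
  intros p q H. pose proof (nrm_sq p q). pose proof (nrm_ge0 p q).
  destruct H.
  - assert (0 < q * q) by (apply Rsqr_pos_lt; auto).
    destruct (Rle_dec 0 p). nra.
    assert (nrm p q > -p) by nra. lra.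
  - lra.
Qed.

Lemma nrm_minus_pos : forall p q, q <> 0 \/ p < 0 -> 0 < nrm p q - p.
Proof.
  intros p q H. pose proof (nrm_sq p q). pose proof (nrm_ge0 p q).
  destruct H.
  - assert (0 < q * q) by (apply Rsqr_pos_lt; auto).
    destruct (Rle_dec p 0). nra.
    assert (nrm p q > p) by nra. lra.
  - lra.
Qed.

Lemma half_angle : forall p q, 0 < nrm p q + p ->
  0 < nrm p q /\
  cos (2 * atan (q / (nrm p q + p))) = p / nrm p q /\
  sin (2 * atan (q / (nrm p q + p))) = q / nrm p q.
Proof.
  intros p q Hpos. pose proof (nrm_sq p q) as HN. pose proof (nrm_ge0 p q).
  set (N := nrm p q) in *.
  assert (HN0 : 0 < N).
  { destruct (Req_dec N 0); [|lra]. rewrite H0 in HN.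
    assert (p = 0) by nra. lra. }
  set (u := q / (N + p)).
  assert (Hu : u * (N + p) = q) by (unfold u; field; lra).
  assert (Hp : 0 < 1 + u * u) by nra.
  split; auto. rewrite cos_2atan, sin_2atan. split.
  - apply (Rmult_eq_reg_r ((1 + u*u) * N)); [|nra].
    field_simplify; try lra.
    assert (E : ((1 - u * u) * N - p * (1 + u * u)) * (N + p) = 0).
    { replace (((1 - u * u) * N - p * (1 + u * u)) * (N + p)) with
        (N * N - p * p - (u * (N+p)) * (u * (N + p))) by ring.
      rewrite Hu, HN. ring. }
    assert (E2 : (1 - u * u) * N - p * (1 + u * u) = 0).
    { apply Rmult_integral in E. destruct E; auto. lra. }
    lra.
  - apply (Rmult_eq_reg_r ((1 + u*u) * N)); [|nra].
    field_simplify; try lra.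
    assert (E : (2 * u * N - q * (1 + u * u)) * (N + p) = 0).
    { replace ((2 * u * N - q * (1 + u * u)) * (N + p)) with
        (2 * (u * (N+p)) * N - q * (N + p) - q * ((u * (N+p)) * u)) by ring.
      rewrite Hu.
      replace (2 * q * N - q * (N + p) - q * (q * u)) with (q * (N - p - q * u)) by ring.
      replace (N - p - q * u) with ((N*N - p * p - q * (u * (N + p))) / (N + p)) by (field; lra).
      rewrite Hu, HN. field. lra. }
    assert (E2 : 2 * u * N - q * (1 + u * u) = 0).
    { apply Rmult_integral in E. destruct E; auto. lra. }
    lra.
Qed.

Lemma atan_pair_pos : forall u v, u * v = 1 -> 0 < u -> atan u + atan v = PI / 2.
Proof.
  intros u v H Hu. replace v with (/ u) by (field_simplify_eq; lra).
  rewrite atan_inv; auto. ring.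
Qed.

Lemma atan_pair_neg : forall u v, u * v = 1 -> u < 0 -> atan u + atan v = - (PI / 2).
Proof.
  intros u v H Hu. pose proof (atan_pair_pos (-u) (-v) ltac:(nra) ltac:(lra)) as H0.
  rewrite !atan_opp in H0. lra.
Qed.

Section Lift.
Variables (X Y : R -> R) (s : R).
Definition Nn (t : R) := nrm (X t) (Y t).
Definition P1 (t : R) := 2 * atan (Y t / (Nn t + X t)).
Definition P2 (t : R) := s * PI - 2 * atan (Y t / (Nn t - X t)).
Definition P3 (t : R) := P1 t + 2 * PI * s.
Definition Alift (t : R) :=
  if Rle_dec t (-1/2) then P1 t else if Rle_dec t (1/2) then P2 t else P3 t.
End Lift.

Lemma continuity_atan : continuity atan.
Proof. intro x. apply derivable_continuous_pt, derivable_pt_atan. Qed.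

Lemma C_nrm : forall X Y lo hi, lo <= hi -> C X lo hi -> C Y lo hi ->
  C (fun t => nrm (X t) (Y t)) lo hi.
Proof.
  intros. unfold nrm. apply (C_app sqrt (fun t => X t * X t + Y t * Y t)); auto.
  apply C_plus; apply C_mult; auto. intros. apply continuity_pt_sqrt. nra.
Qed.

Lemma uv_one : forall p q, q <> 0 ->
  (q / (nrm p q + p)) * (q / (nrm p q - p)) = 1.
Proof.
  intros p q Hq. pose proof (nrm_plus_pos p q (or_introl Hq)).
  pose proof (nrm_minus_pos p q (or_introl Hq)). pose proof (nrm_sq p q).
  field_simplify; try lra.
  replace ((nrm p q)^2 - p^2) with (q * q) by (simpl; nra). simpl. field. auto.
Qed.

Lemma sign_div : forall q d, 0 < d -> (0 < q -> 0 < q / d) /\ (q < 0 -> q / d < 0).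
Proof.
  intros q d Hd. split; intro H.
  - apply Rdiv_lt_0_compat; auto.
  - unfold Rdiv. assert (0 < / d) by (apply Rinv_0_lt_compat; auto). nra.
Qed.

Lemma nrm_opp : forall p q, nrm (-p) (-q) = nrm p q.
Proof. intros. unfold nrm. f_equal. ring. Qed.

Lemma cos_sPI : forall s a, (s = 1 \/ s = -1) -> cos (s * PI + a) = - cos a /\ sin (s * PI + a) = - sin a.
Proof.
  intros s a [->| ->].
  - rewrite Rmult_1_l, cos_plus, sin_plus, cos_PI, sin_PI. split; ring.
  - replace (-1 * PI) with (- PI) by ring.
    rewrite cos_plus, sin_plus, cos_neg, sin_neg, cos_PI, sin_PI. split; ring.
Qed.

Section LiftProps.
Variables (X Y : R -> R) (s : R).
Hypothesis Hs : s = 1 \/ s = -1.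
Hypothesis HCX : C X (-1) 1.
Hypothesis HCY : C Y (-1) 1.
Hypothesis HXm : 0 < X (-1).
Hypothesis HYm : Y (-1) = 0.
Hypothesis HXp : 0 < X 1.
Hypothesis HYp : Y 1 = 0.
Hypothesis HX0 : X 0 < 0.
Hypothesis HY0 : Y 0 = 0.
Hypothesis Hneg : forall t, -1 < t < 0 -> s * Y t > 0.
Hypothesis Hpos : forall t, 0 < t < 1 -> s * Y t < 0.

Lemma Yne : forall t, (-1 < t < 0) \/ (0 < t < 1) -> Y t <> 0.
Proof.
  intros t [H|H]; intro HY; [pose proof (Hneg t H)|pose proof (Hpos t H)]; rewrite HY in *; lra.
Qed.

Lemma plus_pos_1 : forall t, -1 <= t <= -1/2 -> 0 < Nn X Y t + X t.
Proof.
  intros t H. apply nrm_plus_pos. destruct (Req_dec t (-1)). subst; auto.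
  left. apply Yne. lra.
Qed.
Lemma plus_pos_3 : forall t, 1/2 <= t <= 1 -> 0 < Nn X Y t + X t.
Proof.
  intros t H. apply nrm_plus_pos. destruct (Req_dec t 1). subst; auto.
  left. apply Yne. lra.
Qed.
Lemma minus_pos_2 : forall t, -1/2 <= t <= 1/2 -> 0 < Nn X Y t - X t.
Proof.
  intros t H. apply nrm_minus_pos. destruct (Req_dec t 0). subst; auto.
  left. apply Yne. lra.
Qed.

Lemma sign_Y_half : s * Y (-1/2) > 0 /\ s * Y (1/2) < 0.
Proof. split; [apply Hneg|apply Hpos]; lra. Qed.

Lemma P12 : P1 X Y (-1/2) = P2 X Y s (-1/2).
Proof.
  unfold P1, P2. pose proof (uv_one (X (-1/2)) (Y (-1/2)) (Yne (-1/2) ltac:(lra))) as Huv.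
  fold (Nn X Y (-1/2)) in Huv.
  pose proof (plus_pos_1 (-1/2) ltac:(lra)). pose proof (minus_pos_2 (-1/2) ltac:(lra)).
  destruct sign_Y_half as [H1 _].
  destruct Hs as [-> | ->].
  - pose proof (proj1 (sign_div (Y (-1/2)) _ H)).
    pose proof (atan_pair_pos _ _ Huv ltac:(apply H2; lra)). lra.
  - pose proof (proj2 (sign_div (Y (-1/2)) _ H)).
    pose proof (atan_pair_neg _ _ Huv ltac:(apply H2; lra)). lra.
Qed.

Lemma P23 : P2 X Y s (1/2) = P3 X Y s (1/2).
Proof.
  unfold P3, P1, P2. pose proof (uv_one (X (1/2)) (Y (1/2)) (Yne (1/2) ltac:(lra))) as Huv.
  fold (Nn X Y (1/2)) in Huv.
  pose proof (plus_pos_3 (1/2) ltac:(lra)). pose proof (minus_pos_2 (1/2) ltac:(lra)).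
  destruct sign_Y_half as [_ H1].
  destruct Hs as [-> | ->].
  - pose proof (proj2 (sign_div (Y (1/2)) _ H)).
    pose proof (atan_pair_neg _ _ Huv ltac:(apply H2; lra)). lra.
  - pose proof (proj1 (sign_div (Y (1/2)) _ H)).
    pose proof (atan_pair_pos _ _ Huv ltac:(apply H2; lra)). lra.
Qed.

Lemma C_Nn : C (Nn X Y) (-1) 1.
Proof. apply C_nrm; auto; lra. Qed.

Lemma C_P1 : C (P1 X Y) (-1) (-1/2).
Proof.
  unfold P1. apply C_mult. apply C_const.
  apply (C_app atan (fun t => Y t / (Nn X Y t + X t))). lra.
  apply C_div. lra. apply (C_sub Y (-1) 1); auto; lra.
  apply C_plus; apply (C_sub _ (-1) 1); auto; try lra. apply C_Nn.
  intros t Ht. pose proof (plus_pos_1 t Ht). lra.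
  intros; apply continuity_atan.
Qed.

Lemma C_P3 : C (P3 X Y s) (1/2) 1.
Proof.
  unfold P3, P1. apply C_plus; [|apply C_const]. apply C_mult. apply C_const.
  apply (C_app atan (fun t => Y t / (Nn X Y t + X t))). lra.
  apply C_div. lra. apply (C_sub Y (-1) 1); auto; lra.
  apply C_plus; apply (C_sub _ (-1) 1); auto; try lra. apply C_Nn.
  intros t Ht. pose proof (plus_pos_3 t Ht). lra.
  intros; apply continuity_atan.
Qed.

Lemma C_P2 : C (P2 X Y s) (-1/2) (1/2).
Proof.
  unfold P2. apply C_minus. apply C_const. apply C_mult. apply C_const.
  apply (C_app atan (fun t => Y t / (Nn X Y t - X t))). lra.
  apply C_div. lra. apply (C_sub Y (-1) 1); auto; lra.
  apply C_minus; apply (C_sub _ (-1) 1); auto; try lra. apply C_Nn.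
  intros t Ht. pose proof (minus_pos_2 t Ht). lra.
  intros; apply continuity_atan.
Qed.

Lemma C_Alift : C (Alift X Y s) (-1) 1.
Proof.
  apply (C_glue _ (-1) (-1/2) 1); try lra.
  - apply (C_ext (P1 X Y)); try lra. intros t Ht. unfold Alift.
    destruct Rle_dec; try lra. auto. apply C_P1.
  - apply (C_glue _ (-1/2) (1/2) 1); try lra.
    + apply (C_ext (P2 X Y s)); try lra. intros t Ht. unfold Alift.
      destruct (Rle_dec t (-1/2)). assert (t = -1/2) by lra. subst. symmetry; apply P12.
      destruct Rle_dec; try lra. auto. apply C_P2.
    + apply (C_ext (P3 X Y s)); try lra. intros t Ht. unfold Alift.
      destruct (Rle_dec t (-1/2)); try lra.
      destruct (Rle_dec t (1/2)). assert (t = 1/2) by lra. subst. symmetry; apply P23.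
      auto. apply C_P3.
Qed.

Lemma Alift_m1 : Alift X Y s (-1) = 0.
Proof.
  unfold Alift, P1. destruct Rle_dec; try lra. rewrite HYm. unfold Rdiv.
  rewrite Rmult_0_l, atan_0. ring.
Qed.

Lemma Alift_p1 : Alift X Y s 1 = 2 * PI * s.
Proof.
  unfold Alift, P3, P1. destruct Rle_dec; try lra. destruct Rle_dec; try lra.
  rewrite HYp. unfold Rdiv. rewrite Rmult_0_l, atan_0. ring.
Qed.

Lemma Alift_cs : forall t, -1 <= t <= 1 ->
  0 < Nn X Y t /\ cos (Alift X Y s t) = X t / Nn X Y t /\ sin (Alift X Y s t) = Y t / Nn X Y t.
Proof.
  intros t Ht. unfold Alift.
  destruct (Rle_dec t (-1/2)).
  - apply half_angle. apply plus_pos_1. lra.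
  - destruct (Rle_dec t (1/2)).
    + pose proof (minus_pos_2 t ltac:(lra)).
      pose proof (half_angle (- X t) (- Y t)). rewrite nrm_opp in H0.
      fold (Nn X Y t) in H0. destruct H0 as [HN [Hc Hsn]]. lra.
      unfold P2. replace (s * PI - 2 * atan (Y t / (Nn X Y t - X t))) with
        (s * PI + 2 * atan (- Y t / (Nn X Y t + - X t))).
      destruct (cos_sPI s (2 * atan (- Y t / (Nn X Y t + - X t))) Hs) as [E1 E2].
      rewrite E1, E2, Hc, Hsn. split; auto. split; field; lra.
      unfold Rdiv. rewrite Ropp_mult_distr_l_reverse. rewrite atan_opp.
      replace (Nn X Y t + - X t) with (Nn X Y t - X t) by ring. ring.
    + unfold P3. destruct Hs as [Hs1|Hs1]; rewrite Hs1.
      * replace 1 with (IZR 1) at 2 by reflexivity.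
        rewrite cos_per, sin_per. apply half_angle. apply plus_pos_3. lra.
      * replace (-1) with (IZR (-1)) at 1 by reflexivity.
        rewrite cos_per, sin_per. apply half_angle. apply plus_pos_3. lra.
Qed.
End LiftProps.

Definition gg (c : R -> R) (x : R) := x * c x.
Definition GG (c : R -> R) (n : nat) (x : R) := Nat.iter n (gg c) x.
Fixpoint SS (c : R -> R) (n : nat) (x : R) : R :=
  match n with O => 0 | S k => SS c k x + (1 - 2 * (GG c k x) ^ 2) end.

Lemma GG_S : forall c n x, GG c (S n) x = gg c (GG c n x).
Proof. reflexivity. Qed.

Section Dyn.
Variable c : R -> R.
Hypothesis Hc1 : forall x, -1 <= x <= 1 -> (c x = 1 <-> (x = -1 \/ x = 0 \/ x = 1)).
Hypothesis Hmono : forall x y, -1 <= x <= 1 -> -1 <= y <= 1 -> x < y -> x * c x < y * c y.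

Lemma gg_m1 : gg c (-1) = -1.
Proof. unfold gg. rewrite (proj2 (Hc1 (-1) ltac:(lra))); auto. ring. Qed.
Lemma gg_0 : gg c 0 = 0.
Proof. unfold gg. ring. Qed.
Lemma gg_1 : gg c 1 = 1.
Proof. unfold gg. rewrite (proj2 (Hc1 1 ltac:(lra))); auto. ring. Qed.

Lemma gg_le : forall x y, -1 <= x <= 1 -> -1 <= y <= 1 -> x <= y -> gg c x <= gg c y.
Proof. intros x y Hx Hy H. destruct (Req_dec x y). subst; lra. unfold gg. left; apply Hmono; auto; lra. Qed.
Lemma gg_lt : forall x y, -1 <= x <= 1 -> -1 <= y <= 1 -> x < y -> gg c x < gg c y.
Proof. intros. unfold gg. apply Hmono; auto. Qed.

Lemma gg_negR : forall x, -1 <= x <= 0 -> -1 <= gg c x <= 0.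
Proof. intros x H. rewrite <- gg_m1, <- gg_0. split; apply gg_le; lra. Qed.
Lemma gg_posR : forall x, 0 <= x <= 1 -> 0 <= gg c x <= 1.
Proof. intros x H. rewrite <- gg_1, <- gg_0. split; apply gg_le; lra. Qed.
Lemma gg_R : forall x, -1 <= x <= 1 -> -1 <= gg c x <= 1.
Proof. intros x H. destruct (Rle_dec x 0). pose proof (gg_negR x ltac:(lra)); lra.
  pose proof (gg_posR x ltac:(lra)); lra. Qed.

Lemma GG_negR : forall n x, -1 <= x <= 0 -> -1 <= GG c n x <= 0.
Proof. induction n; intros x H. simpl; lra. rewrite GG_S. apply gg_negR. auto. Qed.
Lemma GG_posR : forall n x, 0 <= x <= 1 -> 0 <= GG c n x <= 1.
Proof. induction n; intros x H. simpl; lra. rewrite GG_S. apply gg_posR. auto. Qed.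
Lemma GG_R : forall n x, -1 <= x <= 1 -> -1 <= GG c n x <= 1.
Proof. induction n; intros x H. simpl; lra. rewrite GG_S. apply gg_R. auto. Qed.

Lemma GG_m1 : forall n, GG c n (-1) = -1.
Proof. induction n. reflexivity. rewrite GG_S, IHn. apply gg_m1. Qed.
Lemma GG_0 : forall n, GG c n 0 = 0.
Proof. induction n. reflexivity. rewrite GG_S, IHn. apply gg_0. Qed.
Lemma GG_1 : forall n, GG c n 1 = 1.
Proof. induction n. reflexivity. rewrite GG_S, IHn. apply gg_1. Qed.

Lemma SS_m1 : forall n, SS c n (-1) = - INR n.
Proof. induction n. simpl; ring. simpl SS. rewrite IHn, GG_m1, S_INR. ring. Qed.
Lemma SS_0 : forall n, SS c n 0 = INR n.
Proof. induction n. simpl; ring. simpl SS. rewrite IHn, GG_0, S_INR. ring. Qed.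
Lemma SS_1 : forall n, SS c n 1 = - INR n.
Proof. induction n. simpl; ring. simpl SS. rewrite IHn, GG_1, S_INR. ring. Qed.

Lemma GG_up : forall x, -1 <= x <= 1 -> gg c x > x -> forall k, GG c (S k) x > x.
Proof.
  intros x Hx Hg.
  assert (H : forall k, GG c (S k) x > GG c k x).
  { induction k. simpl. auto. rewrite (GG_S c (S k)), (GG_S c k).
    apply gg_lt; [apply GG_R; auto | rewrite <- GG_S; apply GG_R; auto | rewrite <- GG_S; lra]. }
  induction k. apply (H 0%nat). pose proof (H (S k)). lra.
Qed.
Lemma GG_down : forall x, -1 <= x <= 1 -> gg c x < x -> forall k, GG c (S k) x < x.
Proof.
  intros x Hx Hg.
  assert (H : forall k, GG c (S k) x < GG c k x).
  { induction k. simpl. auto. rewrite (GG_S c (S k)), (GG_S c k).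
    apply gg_lt; [rewrite <- GG_S; apply GG_R; auto | apply GG_R; auto | rewrite <- GG_S; lra]. }
  induction k. apply (H 0%nat). pose proof (H (S k)). lra.
Qed.

Lemma GG_fix : forall n x, (1 <= n)%nat -> -1 <= x <= 1 -> GG c n x = x ->
  x = -1 \/ x = 0 \/ x = 1.
Proof.
  intros n x Hn Hx Hf. destruct n as [|k]; [lia|].
  destruct (Rtotal_order (gg c x) x) as [H|[H|H]].
  - pose proof (GG_down x Hx H k). lra.
  - unfold gg in H. destruct (Req_dec x 0). auto.
    apply Hc1; auto. apply (Rmult_eq_reg_l x); auto. lra.
  - pose proof (GG_up x Hx H k). lra.
Qed.

Lemma case1_signs : (forall x, -1 <= x <= 1 -> 1/2 <= c x <= 1) ->
  (forall x, -1 < x < 0 -> gg c x > x) /\ (forall x, 0 < x < 1 -> gg c x < x).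
Proof.
  intros Hr. split; intros x Hx; unfold gg;
  assert (c x <> 1) by (intro E; apply Hc1 in E; lra);
  pose proof (Hr x ltac:(lra)); nra.
Qed.
Lemma case2_signs : (forall x, -1 <= x <= 1 -> 1 <= c x <= 2) ->
  (forall x, -1 < x < 0 -> gg c x < x) /\ (forall x, 0 < x < 1 -> gg c x > x).
Proof.
  intros Hr. split; intros x Hx; unfold gg;
  assert (c x <> 1) by (intro E; apply Hc1 in E; lra);
  pose proof (Hr x ltac:(lra)); nra.
Qed.

Hypothesis HC : C c (-1) 1.

Lemma C_gg : C (gg c) (-1) 1.
Proof. unfold gg. apply C_mult; auto. apply C_id; lra. Qed.
Lemma C_GG : forall n, C (GG c n) (-1) 1.
Proof.
  induction n.
  - unfold GG. simpl. apply C_id; lra.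
  - apply (C_ext (fun x => gg c (GG c n x))). intros; rewrite GG_S; auto. lra.
    apply (C_comp (GG c n) (gg c) (-1) 1 (-1) 1); try lra; auto. apply C_gg.
    intros; apply GG_R; auto.
Qed.
Lemma C_SS : forall n, C (SS c n) (-1) 1.
Proof.
  induction n.
  - simpl. apply C_const.
  - simpl. apply C_plus; auto. apply C_minus. apply C_const. apply C_mult. apply C_const.
    simpl. apply C_mult. apply C_GG. apply C_mult. apply C_GG. apply C_const.
Qed.
End Dyn.

Lemma polar_per : forall th r z, polar (th + 2 * PI * IZR z) r = polar th r.
Proof. intros. unfold polar. rewrite cos_per, sin_per. reflexivity. Qed.

Lemma core_vec : forall th r D S,
  vsub (polar th r) (polar (th + D) (r + S)) =
  (exp r * (cos th * (1 - exp S * cos D) - sin th * (- exp S * sin D)),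
   exp r * (sin th * (1 - exp S * cos D) + cos th * (- exp S * sin D))).
Proof.
  intros. unfold vsub, polar. simpl. rewrite exp_plus, cos_plus, sin_plus.
  f_equal; ring.
Qed.

Lemma core_norm : forall th r D S,
  vnorm (vsub (polar th r) (polar (th + D) (r + S))) =
  exp r * nrm (1 - exp S * cos D) (- exp S * sin D).
Proof.
  intros. rewrite core_vec. unfold vnorm, nrm. simpl.
  set (X := 1 - exp S * cos D). set (Y := - exp S * sin D).
  pose proof (sin2_cos2 th) as H. unfold Rsqr in H.
  replace ((exp r * (cos th * X - sin th * Y)) * (exp r * (cos th * X - sin th * Y)) +
    (exp r * (sin th * X + cos th * Y)) * (exp r * (sin th * X + cos th * Y)))
  with ((exp r * exp r) * (X * X + Y * Y)).
  rewrite sqrt_mult_alt by (pose proof (exp_pos r); nra).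
  rewrite sqrt_square by (left; apply exp_pos). reflexivity.
  replace (exp r * exp r * (X * X + Y * Y)) with
   (exp r * exp r * (X * X + Y * Y) * (sin th * sin th + cos th * cos th)) by (rewrite H; ring).
  ring.
Qed.

Lemma core_dir : forall th r D S A,
  let X := 1 - exp S * cos D in let Y := - exp S * sin D in
  0 < nrm X Y -> cos A = X / nrm X Y -> sin A = Y / nrm X Y ->
  let v := vsub (polar th r) (polar (th + D) (r + S)) in
  vscal (/ vnorm v) v = (cos (th + A), sin (th + A)).
Proof.
  intros th r D S A X Y HN Hc Hs v. unfold v. rewrite core_norm. fold X Y.
  rewrite core_vec. fold X Y. unfold vscal. simpl.
  pose proof (exp_pos r). rewrite cos_plus, sin_plus, Hc, Hs.
  f_equal; field; lra.
Qed.

Lemma polar_rep : forall x : pt, x <> origin -> exists th r, x = polar th r.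
Proof.
  intros [p q] Hx. unfold origin in Hx.
  assert (HN : 0 < nrm p q).
  { pose proof (nrm_sq p q). pose proof (nrm_ge0 p q).
    destruct (Req_dec (nrm p q) 0); [|lra]. rewrite H1 in H.
    assert (p = 0) by nra. assert (q = 0) by nra. subst. congruence. }
  exists (if Rlt_dec 0 (nrm p q + p) then 2 * atan (q / (nrm p q + p)) else PI).
  exists (ln (nrm p q)). unfold polar. rewrite exp_ln by auto.
  destruct Rlt_dec.
  - destruct (half_angle p q r) as [_ [Hc Hs]]. rewrite Hc, Hs. f_equal; field; lra.
  - pose proof (nrm_sq p q). assert (Hle : nrm p q + p <= 0) by lra.
    assert (Hm : 0 < nrm p q - p) by lra.
    assert (E : (nrm p q + p) * (nrm p q - p) = q * q) by nra.
    assert (0 <= q * q) by nra.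
    assert (Hp : p = - nrm p q) by nra.
    assert (q = 0). { rewrite Hp in E. nra. }
    rewrite cos_PI, sin_PI. f_equal; lra.
Qed.

Section Iter.
Variables (m : nat) (c : R -> R) (a b : R) (F : pt -> pt).
Hypothesis Hm : (1 <= m)%nat.
Hypothesis Hab : 0 < b - a.
Hypothesis HF : is_F a b m c F.
Hypothesis Hc1 : forall x, -1 <= x <= 1 -> (c x = 1 <-> (x = -1 \/ x = 0 \/ x = 1)).
Hypothesis Hmono : forall x y, -1 <= x <= 1 -> -1 <= y <= 1 -> x < y -> x * c x < y * c y.

Definition hh := (b - a) / INR m.

Lemma INRm_pos : 0 < INR m.
Proof. apply lt_0_INR. lia. Qed.

Lemma hh_pos : 0 < hh.
Proof. unfold hh. apply Rdiv_lt_0_compat; auto. apply INRm_pos. Qed.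

Lemma apt_eq : forall j, apt a b m j = a + INR j * hh.
Proof. intros. unfold apt, hh. field. pose proof INRm_pos. lra. Qed.

Lemma apt_prev : forall i, (1 <= i)%nat -> apt a b m (i - 1) = a + (INR i - 1) * hh.
Proof. intros. rewrite apt_eq, minus_INR by lia. simpl. reflexivity. Qed.

Lemma phi_eq : forall i th, (1 <= i)%nat ->
  phi a b m i th = 2 * (th - apt a b m (i - 1)) / hh - 1.
Proof.
  intros. unfold phi. f_equal. f_equal. rewrite (apt_eq i), apt_prev by auto. ring.
Qed.
Lemma phi_inv_eq : forall i s, (1 <= i)%nat ->
  phi_inv a b m i s = apt a b m (i - 1) + (s + 1) * hh / 2.
Proof.
  intros. unfold phi_inv. f_equal. f_equal. f_equal. rewrite (apt_eq i), apt_prev by auto. ring.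
Qed.

Lemma phi_range : forall i th, (1 <= i)%nat ->
  apt a b m (i - 1) <= th <= apt a b m i -> -1 <= phi a b m i th <= 1.
Proof.
  intros i th Hi Hth. rewrite phi_eq by auto. rewrite (apt_eq i), apt_prev in * by auto.
  pose proof hh_pos. split.
  - assert (0 <= (th - (a + (INR i - 1) * hh)) / hh). unfold Rdiv; apply Rmult_le_pos; [lra | left; apply Rinv_0_lt_compat; lra]. lra.
  - assert ((th - (a + (INR i - 1) * hh)) / hh <= 1).
    { apply (Rmult_le_reg_r hh); auto. unfold Rdiv. rewrite Rmult_assoc, Rinv_l by lra. lra. }
    lra.
Qed.

Lemma phi_inv_range : forall i s, (1 <= i)%nat -> -1 <= s <= 1 ->
  apt a b m (i - 1) <= phi_inv a b m i s <= apt a b m i.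
Proof.
  intros i s Hi Hs. rewrite phi_inv_eq by auto. rewrite (apt_eq i), apt_prev by auto.
  pose proof hh_pos. split; nra.
Qed.

Lemma phi_phi_inv : forall i s, (1 <= i)%nat -> phi a b m i (phi_inv a b m i s) = s.
Proof.
  intros. rewrite phi_eq, phi_inv_eq by auto. field. pose proof hh_pos; lra.
Qed.

Lemma phi_inv_phi : forall i th, (1 <= i)%nat -> phi_inv a b m i (phi a b m i th) = th.
Proof.
  intros. rewrite phi_eq, phi_inv_eq by auto. field. pose proof hh_pos; lra.
Qed.

Lemma iterF_piece0 : forall i th r n, (1 <= i <= m)%nat ->
  apt a b m (i - 1) <= th <= apt a b m i ->
  Nat.iter n F (polar th r) =
  polar (phi_inv a b m i (GG c n (phi a b m i th))) (r + SS c n (phi a b m i th)).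
Proof.
  intros i th r n Hi Hth. destruct HF as [_ [Hp _]].
  pose proof (phi_range i th ltac:(lia) Hth) as Hr.
  induction n.
  - simpl. rewrite phi_inv_phi by lia. f_equal. ring.
  - change (Nat.iter (S n) F (polar th r)) with (F (Nat.iter n F (polar th r))).
    rewrite IHn. rewrite (Hp i); auto.
    2: { apply phi_inv_range. lia. apply GG_R; auto. }
    rewrite phi_phi_inv by lia. rewrite GG_S. unfold gg. simpl SS. f_equal. ring.
Qed.

Lemma iterF_piece : forall i th r n, (1 <= i <= m)%nat ->
  apt a b m (i - 1) <= th <= apt a b m i ->
  Nat.iter n F (polar th r) =
  polar (th + (GG c n (phi a b m i th) - phi a b m i th) * hh / 2) (r + SS c n (phi a b m i th)).
Proof.
  intros i th r n H1 H2. rewrite (iterF_piece0 i) by auto. f_equal.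
  rewrite phi_inv_eq by lia. rewrite (phi_eq i th) by lia. field. pose proof hh_pos; lra.
Qed.

Lemma iterF_out : forall th r n, (forall k : Z, ~ (a <= th + 2 * PI * IZR k <= b)) ->
  Nat.iter n F (polar th r) = polar th (r - INR n).
Proof.
  intros th r n Hk. destruct HF as [_ [_ Ho]]. induction n.
  - simpl. f_equal. ring.
  - change (Nat.iter (S n) F (polar th r)) with (F (Nat.iter n F (polar th r))).
    rewrite IHn, Ho by auto. rewrite S_INR. f_equal. ring.
Qed.
End Iter.

Lemma continuity_Rmin_r : forall M, continuity (fun x => Rmin x M).
Proof.
  intro M. apply (continuity_ext (fun x => (x + M - Rabs (x - M)) / 2)).
  intro y. unfold Rmin, Rabs. destruct Rle_dec; destruct Rcase_abs; lra.
  intro x. unfold Rdiv. apply continuity_pt_mult; [|apply continuity_pt_const; intros u v; auto].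
  apply continuity_pt_minus. apply continuity_pt_plus.
  apply derivable_continuous_pt, derivable_pt_id. apply continuity_pt_const; intros u v; auto.
  apply (continuity_pt_comp (fun x => x - M) Rabs).
  apply continuity_pt_minus. apply derivable_continuous_pt, derivable_pt_id.
  apply continuity_pt_const; intros u v; auto. apply Rcontinuity_abs.
Qed.

Lemma piece_index : forall m t, (1 <= m)%nat -> 0 <= t <= INR m ->
  exists i, (1 <= i <= m)%nat /\ INR i - 1 <= t <= INR i.
Proof.
  induction m; intros t Hm Ht. lia.
  destruct (Rle_dec t (INR m)).
  - destruct m. exists 1%nat. simpl in *. split; [lia|lra].
    destruct (IHm t) as [i [Hi Hti]]. lia. lra. exists i. split; [lia|auto].
  - exists (S m). split. lia. rewrite S_INR in *. lra.
Qed.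

Lemma sin_sign : forall D, -PI < D < PI -> (0 < D -> 0 < sin D) /\ (D < 0 -> sin D < 0).
Proof.
  intros D HD. split; intro H.
  - apply sin_gt_0; lra.
  - rewrite <- (Ropp_involutive D), sin_neg. assert (0 < sin (- D)) by (apply sin_gt_0; lra). lra.
Qed.

Lemma sin_zero_small : forall D, -PI < D < PI -> sin D = 0 -> D = 0.
Proof.
  intros D HD Hs. destruct (Rtotal_order D 0) as [H|[H|H]]; auto.
  pose proof (proj2 (sin_sign D HD) H). lra.
  pose proof (proj1 (sin_sign D HD) H). lra.
Qed.

Section Main.
Variables (m : nat) (c : R -> R) (a b : R) (F : pt -> pt) (n : nat).
Hypothesis Hm : (1 <= m)%nat.
Hypothesis Hn : (1 <= n)%nat.
Hypothesis Hab : 0 < b - a < 2 * PI.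
Hypothesis HF : is_F a b m c F.
Hypothesis Hc1 : forall x, -1 <= x <= 1 -> (c x = 1 <-> (x = -1 \/ x = 0 \/ x = 1)).
Hypothesis Hmono : forall x y, -1 <= x <= 1 -> -1 <= y <= 1 -> x < y -> x * c x < y * c y.
Hypothesis HC : C c (-1) 1.

Let h := hh m a b.

Lemma h_pos : 0 < h.
Proof. apply hh_pos; auto; lra. Qed.

Lemma h_lt : h < 2 * PI.
Proof.
  unfold h, hh. pose proof (le_INR 1 m Hm). simpl in H.
  apply (Rmult_lt_reg_r (INR m)). lra. unfold Rdiv. rewrite Rmult_assoc, Rinv_l by lra.
  nra.
Qed.

Lemma h_mul : INR m * h = b - a.
Proof. unfold h, hh. field. pose proof (INRm_pos m Hm). lra. Qed.

Definition Dd (x : R) := (GG c n x - x) * h / 2.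
Definition WX (x : R) := 1 - exp (SS c n x) * cos (Dd x).
Definition WY (x : R) := - exp (SS c n x) * sin (Dd x).

Lemma GGdiff : forall x, -1 <= x <= 1 -> -1 <= GG c n x - x <= 1.
Proof.
  intros x Hx. destruct (Rle_dec x 0).
  - pose proof (GG_negR c Hc1 Hmono n x ltac:(lra)). lra.
  - pose proof (GG_posR c Hc1 Hmono n x ltac:(lra)). lra.
Qed.

Lemma Dd_small : forall x, -1 <= x <= 1 -> -PI < Dd x < PI.
Proof.
  intros x Hx. pose proof (GGdiff x Hx). pose proof h_pos. pose proof h_lt.
  unfold Dd. split; nra.
Qed.

Lemma Dd_sign : forall x, -1 <= x <= 1 ->
  (GG c n x > x -> 0 < sin (Dd x)) /\ (GG c n x < x -> sin (Dd x) < 0).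
Proof.
  intros x Hx. pose proof (sin_sign _ (Dd_small x Hx)). pose proof h_pos.
  unfold Dd in *. split; intro; apply H; nra.
Qed.

Lemma expn_lt1 : exp (- INR n) < 1.
Proof. rewrite <- exp_0. apply exp_increasing. pose proof (le_INR 1 n Hn). simpl in H. lra. Qed.
Lemma expn_gt1 : 1 < exp (INR n).
Proof. rewrite <- exp_0. apply exp_increasing. pose proof (le_INR 1 n Hn). simpl in H. lra. Qed.

Lemma Dd_m1 : Dd (-1) = 0.
Proof. unfold Dd. rewrite GG_m1; auto. field. Qed.
Lemma Dd_0 : Dd 0 = 0.
Proof. unfold Dd. rewrite GG_0. field. Qed.
Lemma Dd_1 : Dd 1 = 0.
Proof. unfold Dd. rewrite GG_1; auto. field. Qed.

Lemma WX_m1 : 0 < WX (-1).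
Proof. unfold WX. rewrite Dd_m1, cos_0, SS_m1; auto. pose proof expn_lt1. lra. Qed.
Lemma WX_1 : 0 < WX 1.
Proof. unfold WX. rewrite Dd_1, cos_0, SS_1; auto. pose proof expn_lt1. lra. Qed.
Lemma WX_0 : WX 0 < 0.
Proof. unfold WX. rewrite Dd_0, cos_0, SS_0; auto. pose proof expn_gt1. lra. Qed.
Lemma WY_m1 : WY (-1) = 0.
Proof. unfold WY. rewrite Dd_m1, sin_0. ring. Qed.
Lemma WY_1 : WY 1 = 0.
Proof. unfold WY. rewrite Dd_1, sin_0. ring. Qed.
Lemma WY_0 : WY 0 = 0.
Proof. unfold WY. rewrite Dd_0, sin_0. ring. Qed.

Lemma W_nonzero : forall x, -1 <= x <= 1 -> 0 < nrm (WX x) (WY x).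
Proof.
  intros x Hx. pose proof (nrm_sq (WX x) (WY x)). pose proof (nrm_ge0 (WX x) (WY x)).
  destruct (Req_dec (nrm (WX x) (WY x)) 0) as [E|E]; [|lra].
  rewrite E in H. assert (HY : WY x = 0) by nra. assert (HX : WX x = 0) by nra.
  unfold WY in HY. assert (sin (Dd x) = 0).
  { pose proof (exp_pos (SS c n x)). nra. }
  apply sin_zero_small in H1; [|apply Dd_small; auto].
  assert (GG c n x = x). { unfold Dd in H1. pose proof h_pos. nra. }
  destruct (GG_fix c Hc1 Hmono n x Hn Hx H2) as [E1|[E1|E1]]; rewrite E1 in HX.
  - pose proof WX_m1. lra.
  - pose proof WX_0. lra.
  - pose proof WX_1. lra.
Qed.

Lemma C_Dd : C Dd (-1) 1.
Proof.
  unfold Dd. apply C_mult; [|apply C_const]. apply C_mult; [|apply C_const].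
  apply C_minus. apply C_GG; auto. apply C_id; lra.
Qed.
Lemma C_WX : C WX (-1) 1.
Proof.
  unfold WX. apply C_minus. apply C_const. apply C_mult.
  apply (C_app exp). lra. apply C_SS; auto. intros; apply derivable_continuous_pt, derivable_pt_exp.
  apply (C_app cos). lra. apply C_Dd. intros; apply continuity_cos.
Qed.
Lemma C_WY : C WY (-1) 1.
Proof.
  unfold WY. apply C_mult.
  apply (C_app (fun z => - exp z)). lra. apply C_SS; auto.
  intros; apply continuity_pt_opp, derivable_continuous_pt, derivable_pt_exp.
  apply (C_app sin). lra. apply C_Dd. intros; apply continuity_sin.
Qed.

Lemma F_origin : forall k, Nat.iter k F origin = origin.
Proof. destruct HF as [H0 _]. induction k. reflexivity. simpl. rewrite IHk. auto. Qed.

Lemma out_cond : forall th, b < th < a + 2 * PI ->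
  forall k : Z, ~ (a <= th + 2 * PI * IZR k <= b).
Proof.
  intros th Hth k Hk. pose proof PI_RGT_0.
  destruct (Z_lt_le_dec k 0) as [Hk0|Hk0].
  - assert (IZR k <= -1) by (apply IZR_le; lia). nra.
  - destruct (Z.eq_dec k 0). subst. simpl in Hk. lra.
    assert (1 <= IZR k) by (apply IZR_le; lia). nra.
Qed.

Lemma base_vnorm : forall th r, a <= th < a + 2 * PI ->
  0 < vnorm (vsub (polar th r) (Nat.iter n F (polar th r))).
Proof.
  intros th r Hth. destruct (Rle_dec th b).
  - set (t := (th - a) / h).
    assert (Ht : 0 <= t <= INR m).
    { pose proof h_pos. pose proof h_mul.
      assert (th - a = t * h) by (unfold t; field; lra). split; nra. }
    destruct (piece_index m t Hm Ht) as [i [Hi Hti]].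
    assert (Hpc : apt a b m (i - 1) <= th <= apt a b m i).
    { rewrite apt_prev, apt_eq by (auto; lia). fold h.
      pose proof h_pos.
      assert (th = a + t * h) by (unfold t; field; lra). split; nra. }
    rewrite (iterF_piece m c a b F Hm ltac:(lra) HF Hc1 Hmono i) by auto.
    fold h. rewrite core_norm. pose proof (exp_pos r).
    apply Rmult_lt_0_compat; auto. apply W_nonzero. apply phi_range; auto; try lra; lia.
  - rewrite (iterF_out m c a b F HF) by (apply out_cond; lra).
    replace (polar th (r - INR n)) with (polar (th + 0) (r + - INR n)) by (f_equal; ring).
    rewrite core_norm. apply Rmult_lt_0_compat. apply exp_pos.
    rewrite cos_0, sin_0. apply Rlt_le_trans with (0 + (1 - exp (- INR n))).
    pose proof expn_lt1; lra. rewrite Rplus_0_l. pose proof (nrm_plus_pos (1 - exp (- INR n) * 1) (- exp (- INR n) * 0)).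
    unfold nrm. replace ((- exp (- INR n) * 0)) with 0 by ring.
    replace ((1 - exp (- INR n) * 1) * (1 - exp (- INR n) * 1) + 0 * 0) with ((1 - exp (- INR n)) * (1 - exp (- INR n))) by ring.
    rewrite sqrt_square. lra. pose proof expn_lt1; lra.
Qed.

Lemma reduce : forall th, exists th0 z, a <= th0 < a + 2 * PI /\ th = th0 + 2 * PI * IZR z.
Proof.
  intros th. pose proof PI_RGT_0. set (k := fl ((th - a) / (2 * PI))).
  pose proof (fl_spec ((th - a) / (2 * PI))). fold k in H0.
  exists (th - 2 * PI * IZR k), k. split; [|ring].
  destruct H0 as [H1 H2]. split.
  - apply (Rmult_le_compat_r (2 * PI)) in H1; [|lra].
    replace ((th - a) / (2 * PI) * (2 * PI)) with (th - a) in H1 by (field; lra). lra.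
  - apply (Rmult_lt_compat_r (2 * PI)) in H2; [|lra].
    replace ((th - a) / (2 * PI) * (2 * PI)) with (th - a) in H2 by (field; lra). lra.
Qed.

Lemma no_fix : forall x, x <> origin -> Nat.iter n F x <> x.
Proof.
  intros x Hx Hf. destruct (polar_rep x Hx) as [th [r ->]].
  destruct (reduce th) as [th0 [z [Hr ->]]]. rewrite polar_per in Hf.
  pose proof (base_vnorm th0 r Hr). rewrite Hf in H. unfold vsub, vnorm in H.
  replace (fst (polar th0 r) - fst (polar th0 r)) with 0 in H by ring.
  replace (snd (polar th0 r) - snd (polar th0 r)) with 0 in H by ring.
  simpl in H. rewrite Rmult_0_l, Rplus_0_l, sqrt_0 in H. lra.
Qed.

Lemma isolated : isolated_fixed_point (Nat.iter n F).
Proof.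
  split. apply F_origin. exists 1. split. lra. intros x Hx.
  apply no_fix. intro E. subst. unfold vnorm, origin in Hx. simpl in Hx.
  rewrite Rmult_0_l, Rplus_0_l, sqrt_0 in Hx. lra.
Qed.

Lemma GGn_down : forall t, -1 <= t <= 1 -> gg c t < t -> GG c n t < t.
Proof.
  intros t Ht H. assert (E : exists k, n = S k) by (destruct n; [lia|eauto]).
  destruct E as [k ->]. apply GG_down; auto.
Qed.
Lemma GGn_up : forall t, -1 <= t <= 1 -> gg c t > t -> GG c n t > t.
Proof.
  intros t Ht H. assert (E : exists k, n = S k) by (destruct n; [lia|eauto]).
  destruct E as [k ->]. apply GG_up; auto.
Qed.

Variable sg : Z.
Hypothesis Hsg : sg = 1%Z \/ sg = (-1)%Z.
Hypothesis Hsgn : (forall x, -1 < x < 0 -> IZR sg * (gg c x - x) < 0) /\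
                  (forall x, 0 < x < 1 -> IZR sg * (gg c x - x) > 0).
Let s := IZR sg.

Lemma s_pm : s = 1 \/ s = -1.
Proof. unfold s. destruct Hsg as [-> | ->]; [left|right]; reflexivity. Qed.

Lemma WY_neg : forall t, -1 < t < 0 -> s * WY t > 0.
Proof.
  intros t Ht. destruct Hsgn as [H _]. pose proof (H t Ht) as Hg. fold s in Hg.
  pose proof (exp_pos (SS c n t)). unfold WY.
  destruct (Dd_sign t ltac:(lra)) as [D1 D2].
  destruct s_pm as [E|E]; rewrite E in *.
  + assert (gg c t < t) by lra. pose proof (GGn_down t ltac:(lra) H1).
    pose proof (D2 H2). nra.
  + assert (gg c t > t) by lra. pose proof (GGn_up t ltac:(lra) H1).
    pose proof (D1 H2). nra.
Qed.

Lemma WY_pos : forall t, 0 < t < 1 -> s * WY t < 0.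
Proof.
  intros t Ht. destruct Hsgn as [_ H]. pose proof (H t Ht) as Hg. fold s in Hg.
  pose proof (exp_pos (SS c n t)). unfold WY.
  destruct (Dd_sign t ltac:(lra)) as [D1 D2].
  destruct s_pm as [E|E]; rewrite E in *.
  + assert (gg c t > t) by lra. pose proof (GGn_up t ltac:(lra) H1).
    pose proof (D1 H2). nra.
  + assert (gg c t < t) by lra. pose proof (GGn_down t ltac:(lra) H1).
    pose proof (D2 H2). nra.
Qed.

Definition Af := Alift WX WY s.

Lemma Af_C : C Af (-1) 1.
Proof.
  apply C_Alift. apply s_pm. apply C_WX. apply C_WY. apply WX_m1. apply WX_1. apply WX_0.
  apply WY_neg. apply WY_pos.
Qed.
Lemma Af_m1 : Af (-1) = 0.
Proof. apply Alift_m1. apply WY_m1. Qed.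
Lemma Af_p1 : Af 1 = 2 * PI * s.
Proof. apply Alift_p1. apply WY_1. Qed.
Lemma Af_cs : forall t, -1 <= t <= 1 ->
  0 < Nn WX WY t /\ cos (Af t) = WX t / Nn WX WY t /\ sin (Af t) = WY t / Nn WX WY t.
Proof.
  intros t Ht. apply Alift_cs; auto. apply s_pm. apply WX_m1. apply WX_1. apply WX_0.
  apply WY_neg. apply WY_pos.
Qed.

Definition Bq (v : R) := Af (2 * v - 1).
Lemma Bq_C : C Bq 0 1.
Proof.
  unfold Bq. apply (C_comp (fun v => 2 * v - 1) Af 0 1 (-1) 1); try lra.
  apply C_minus. apply C_mult. apply C_const. apply C_id; lra. apply C_const.
  apply Af_C. intros; lra.
Qed.
Lemma Bq_per : Bq 1 = Bq 0 + 2 * PI * s.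
Proof.
  unfold Bq. replace (2 * 1 - 1) with 1 by ring. replace (2 * 0 - 1) with (-1) by ring.
  rewrite Af_p1, Af_m1. ring.
Qed.
Definition Qf := Stair Bq (2 * PI * s).
Lemma Qf_cont : continuity Qf.
Proof. apply stair_cont. apply Bq_C. apply Bq_per. Qed.
Lemma Qf_local : forall k t, IZR k <= t <= IZR k + 1 ->
  Qf t = 2 * PI * s * IZR k + Af (2 * (t - IZR k) - 1).
Proof. intros. unfold Qf. rewrite (stair_local _ _ t k); auto. apply Bq_per. Qed.

Lemma Qf_m : Qf (INR m) = 2 * PI * s * INR m.
Proof.
  rewrite INR_IZR_INZ. rewrite (Qf_local (Z.of_nat m)) by lra.
  replace (2 * (IZR (Z.of_nat m) - IZR (Z.of_nat m)) - 1) with (-1) by ring.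
  rewrite Af_m1. ring.
Qed.

Definition Bf (u : R) := a + 2 * PI * u + Qf (Rmin (2 * PI * u / h) (INR m)).
Definition Kf := 2 * PI * IZR (1 + sg * Z.of_nat m).

Lemma Bf_cont : continuity Bf.
Proof.
  unfold Bf. intro x. apply continuity_pt_plus.
  apply continuity_pt_plus. apply continuity_pt_const; intros u v; auto.
  apply continuity_pt_mult. apply continuity_pt_const; intros u v; auto.
  apply derivable_continuous_pt, derivable_pt_id.
  apply (continuity_pt_comp (fun u => Rmin (2 * PI * u / h) (INR m)) Qf); [|apply Qf_cont].
  apply (continuity_pt_comp (fun u => 2 * PI * u / h) (fun z => Rmin z (INR m))); [|apply continuity_Rmin_r].
  unfold Rdiv. apply continuity_pt_mult; [|apply continuity_pt_const; intros u v; auto].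
  apply continuity_pt_mult. apply continuity_pt_const; intros u v; auto.
  apply derivable_continuous_pt, derivable_pt_id.
Qed.

Lemma Bf_per : Bf 1 = Bf 0 + Kf.
Proof.
  unfold Bf, Kf. pose proof h_pos. pose proof h_mul. pose proof (INRm_pos m Hm).
  rewrite (Rmin_left (2 * PI * 0 / h)) by (unfold Rdiv; rewrite !Rmult_0_r, Rmult_0_l; lra).
  rewrite (Rmin_right (2 * PI * 1 / h)).
  2: { apply Rlt_le. apply (Rmult_lt_reg_r h); auto. field_simplify; lra. }
  rewrite Qf_m. replace (2 * PI * 0 / h) with (IZR 0) by (simpl; field; lra).
  rewrite (Qf_local 0) by (simpl; lra).
  replace (2 * (IZR 0 - IZR 0) - 1) with (-1) by ring. rewrite Af_m1.
  rewrite plus_IZR, mult_IZR, <- INR_IZR_INZ. unfold s. simpl. ring.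
Qed.

Lemma nrm_x0 : forall p, 0 < p -> nrm p 0 = p.
Proof. intros. unfold nrm. rewrite Rmult_0_r, Rplus_0_r. apply sqrt_square. lra. Qed.

Lemma mainid : forall u0 r, 0 <= u0 < 1 ->
  let th := a + 2 * PI * u0 in
  let v := vsub (polar th r) (Nat.iter n F (polar th r)) in
  vscal (/ vnorm v) v = (cos (Bf u0), sin (Bf u0)).
Proof.
  intros u0 r Hu th v. unfold v. pose proof h_pos. pose proof h_mul. pose proof PI_RGT_0.
  destruct (Rle_dec th b).
  - set (t := 2 * PI * u0 / h).
    assert (Ht : 0 <= t <= INR m).
    { assert (th - a = t * h) by (unfold t, th; field; lra). unfold th in *. split; nra. }
    destruct (piece_index m t Hm Ht) as [i [Hi Hti]].
    assert (Hth : th = a + t * h) by (unfold t, th; field; lra).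
    assert (Hpc : apt a b m (i - 1) <= th <= apt a b m i).
    { rewrite apt_prev, apt_eq by (auto; lia). fold h. split; nra. }
    rewrite (iterF_piece m c a b F Hm ltac:(lra) HF Hc1 Hmono i) by auto.
    fold h. set (ph := phi a b m i th).
    assert (Hph : -1 <= ph <= 1) by (apply phi_range; auto; try lra; lia).
    change ((GG c n ph - ph) * h / 2) with (Dd ph).
    destruct (Af_cs ph Hph) as [HN [Hc Hs]]. unfold Nn, WX, WY in *.
    rewrite (core_dir th r (Dd ph) (SS c n ph) (Af ph) HN Hc Hs).
    assert (Hphe : ph = 2 * (t - (INR i - 1)) - 1).
    { unfold ph. rewrite phi_eq, apt_prev by lia. fold h. rewrite Hth. field. lra. }
    assert (HB : Bf u0 = th + Af ph + 2 * PI * IZR (sg * Z.of_nat (i - 1))).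
    { unfold Bf. fold t. rewrite Rmin_left by lra.
      rewrite (Qf_local (Z.of_nat (i - 1))).
      rewrite <- INR_IZR_INZ, minus_INR by lia. simpl INR. rewrite Hphe.
      rewrite mult_IZR, <- INR_IZR_INZ, minus_INR by lia. unfold th, s. simpl. ring.
      rewrite <- INR_IZR_INZ, minus_INR by lia. simpl. lra. }
    rewrite HB, cos_per, sin_per. reflexivity.
  - assert (Hout : forall k : Z, ~ (a <= th + 2 * PI * IZR k <= b)).
    { apply out_cond. unfold th in *. nra. }
    rewrite (iterF_out m c a b F HF) by auto.
    replace (polar th (r - INR n)) with (polar (th + 0) (r + - INR n)) by (f_equal; ring).
    assert (He : 0 < 1 - exp (- INR n)) by (pose proof expn_lt1; lra).
    rewrite (core_dir th r 0 (- INR n) 0).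
    + assert (HB : Bf u0 = th + 0 + 2 * PI * IZR (sg * Z.of_nat m)).
      { unfold Bf. rewrite Rmin_right.
        rewrite Qf_m. rewrite mult_IZR, <- INR_IZR_INZ. unfold th, s. ring.
        apply Rlt_le. apply (Rmult_lt_reg_r h); auto. unfold Rdiv.
        rewrite Rmult_assoc, Rinv_l by lra. unfold th in n0. lra. }
      rewrite HB, cos_per, sin_per. reflexivity.
    + rewrite cos_0, sin_0, Rmult_1_r, Rmult_0_r, nrm_x0; auto.
    + rewrite cos_0, sin_0, Rmult_1_r, Rmult_0_r, nrm_x0; auto. field. lra.
    + rewrite cos_0, sin_0, Rmult_1_r, Rmult_0_r, nrm_x0; auto. unfold Rdiv. ring.
Qed.

Lemma loopdeg : forall rho, 0 < rho ->
  loop_degree (fun t => let x := circ rho t in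
     vscal (/ vnorm (vsub x (Nat.iter n F x))) (vsub x (Nat.iter n F x)))
   (1 + sg * Z.of_nat m).
Proof.
  intros rho Hrho. pose proof PI_RGT_0.
  exists (fun t => Stair Bf Kf ((2 * PI * t - a) / (2 * PI))).
  split; [|split].
  - intro x. apply (continuity_pt_comp (fun t => (2 * PI * t - a) / (2 * PI)) (Stair Bf Kf)).
    unfold Rdiv. apply continuity_pt_mult; [|apply continuity_pt_const; intros u v; auto].
    apply continuity_pt_minus; [|apply continuity_pt_const; intros u v; auto].
    apply continuity_pt_mult. apply continuity_pt_const; intros u v; auto.
    apply derivable_continuous_pt, derivable_pt_id.
    apply stair_cont. apply C_of_global. apply Bf_cont. lra. apply Bf_per.
  - intros t Ht. cbv zeta.
    set (tau := (2 * PI * t - a) / (2 * PI)).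
    pose proof (fl_spec tau) as Hk. set (k := fl tau) in *.
    set (u0 := tau - IZR k).
    assert (Hu0 : 0 <= u0 < 1) by (unfold u0; lra).
    assert (Hc : circ rho t = polar (a + 2 * PI * u0 + 2 * PI * IZR k) (ln rho)).
    { unfold circ, polar. rewrite exp_ln by auto.
      replace (a + 2 * PI * u0 + 2 * PI * IZR k) with (2 * PI * t).
      reflexivity. unfold u0, tau. field. lra. }
    rewrite Hc, polar_per.
    rewrite (mainid u0 (ln rho) Hu0).
    unfold Stair. fold k. fold u0.
    replace (Kf * IZR k + Bf u0) with (Bf u0 + 2 * PI * IZR ((1 + sg * Z.of_nat m) * k))
      by (unfold Kf; rewrite mult_IZR; ring).
    rewrite cos_per, sin_per. reflexivity.
  - replace ((2 * PI * 1 - a) / (2 * PI)) with ((2 * PI * 0 - a) / (2 * PI) + 1) by (field; lra).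
    rewrite stair_shift by apply Bf_per. unfold Kf. ring.
Qed.

End Main.

Lemma fpi_of : forall m c a b F n (k : Z) sg,
  (1 <= m)%nat -> (1 <= n)%nat -> 0 < b - a < 2 * PI -> is_F a b m c F ->
  (forall x, -1 <= x <= 1 -> (c x = 1 <-> (x = -1 \/ x = 0 \/ x = 1))) ->
  (forall x y, -1 <= x <= 1 -> -1 <= y <= 1 -> x < y -> x * c x < y * c y) ->
  C c (-1) 1 -> (sg = 1%Z \/ sg = (-1)%Z) ->
  ((forall x, -1 < x < 0 -> IZR sg * (gg c x - x) < 0) /\
   (forall x, 0 < x < 1 -> IZR sg * (gg c x - x) > 0)) ->
  k = (1 + sg * Z.of_nat m)%Z ->
  fixed_point_index (Nat.iter n F) k.
Proof.
  intros m c a b F n k sg Hm Hn Hab HF Hc1 Hmono HC Hsg Hsgn ->.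
  exists 1. split. lra. split.
  - intros x Hx. apply (no_fix m c a b F n Hm Hn Hab HF Hc1 Hmono).
    intro E. subst. unfold vnorm, origin in Hx. simpl in Hx.
    rewrite Rmult_0_l, Rplus_0_l, sqrt_0 in Hx. lra.
  - intros rho Hrho. apply (loopdeg m c a b F n Hm Hn Hab HF Hc1 Hmono HC sg Hsg Hsgn rho). lra.
Qed.

Theorem mainTheorem4 :
  forall (m : nat) (c : R -> R) (a b : R) (F : pt -> pt),
    (1 <= m)%nat ->
    cont_on c (-1) 1 ->
    (forall x, -1 <= x <= 1 -> (c x = 1 <-> (x = -1 \/ x = 0 \/ x = 1))) ->
    (forall x y, -1 <= x <= 1 -> -1 <= y <= 1 -> x < y -> x * c x < y * c y) ->
    0 < b - a < 2 * PI ->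
    is_F a b m c F ->
    (forall n : nat, (1 <= n)%nat -> isolated_fixed_point (Nat.iter n F)) /\
    ((forall x, -1 <= x <= 1 -> 1/2 <= c x <= 1) ->
       forall n : nat, (1 <= n)%nat ->
         fixed_point_index (Nat.iter n F) (1 - Z.of_nat m)%Z) /\
    ((forall x, -1 <= x <= 1 -> 1 <= c x <= 2) ->
       forall n : nat, (1 <= n)%nat ->
         fixed_point_index (Nat.iter n F) (1 + Z.of_nat m)%Z).
Proof.
  intros m c a b F Hm Hcont Hc1 Hmono Hab HF.
  assert (HC : C c (-1) 1) by (apply C_of_cont_on; [lra | exact Hcont]).
  split; [|split].
  - intros n Hn. apply (isolated m c a b F n Hm Hn Hab HF Hc1 Hmono).
  - intros Hr n Hn. destruct (case1_signs c Hc1 Hr) as [S1 S2].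
    apply (fpi_of m c a b F n _ (-1)%Z Hm Hn Hab HF Hc1 Hmono HC); [right; reflexivity| |lia].
    split; intros x Hx; [pose proof (S1 x Hx)|pose proof (S2 x Hx)]; lra.
  - intros Hr n Hn. destruct (case2_signs c Hc1 Hr) as [S1 S2].
    apply (fpi_of m c a b F n _ 1%Z Hm Hn Hab HF Hc1 Hmono HC); [left; reflexivity| |lia].
    split; intros x Hx; [pose proof (S1 x Hx)|pose proof (S2 x Hx)]; lra.
Qed.
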